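(* Let $n\ge 4$ and let $G$ be a graph on vertex set $[n]$ with $e(G)>\binom{n-1}{2}+1$ or $\rho(G)>n-2$. For $2\le j\le\lceil n/2\rceil$ let $e_j=\{j,n+2-j\}$, and for $1\le k\le\lfloor n/2\rfloor$ let $e'_k=\{k,n+1-k\}$. Then (i) $\{e_3,\ldots,e_{\lceil n/2\rceil}\}\subseteq E(\mathcal{K}(G))$, and (ii) $\{e'_1,\ldots,e'_{\lfloor n/2\rfloor}\}\subseteq E(\mathcal{K}(G))$.
   Context: $e(G)$ is the number of edges and $\rho(G)$ the adjacency spectral radius of $G$. Kelmans transformation: for vertices $x,y$, $\mathcal{K}_{xy}(G)$ is obtained from $G$ by deleting all edges between $y$ and $N_G(y)\setminus(N_G(x)\cup\{x\})$ and adding all edges between $x$ and $N_G(y)\setminus(N_G(x)\cup\{x\})$. For $G$ on $[n]$, $\mathcal{K}(G)$ denotes the graph obtained by repeatedly applying $\mathcal{K}_{xy}$ for pairs $x<y$ until the graph is invariant under all $\mathcal{K}_{xy}$ with $x<y$ (the result is independent of the order of transformations). *)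

(* Defs.v *)
From HB Require Import structures.
From mathcomp Require Import all_boot all_order all_algebra all_field.
Set Implicit Arguments. Unset Strict Implicit. Unset Printing Implicit Defensive.
Import Order.TTheory GRing.Theory Num.Theory.

(* Vertex set [n] = {1,..,n} is represented by 'I_n, label v <-> ordinal v-1
   (so the order on labels is the order on ordinals).
   A graph is its edge set: a set of 2-element subsets of 'I_n. *)
Definition graph (n : nat) := {set {set 'I_n}}.

Definition simple_graph n (G : graph n) : Prop :=
  forall e, e \in G -> #|e| = 2.

Definition nedges n (G : graph n) : nat := #|G|.

Definition nbhd n (G : graph n) (x : 'I_n) : {set 'I_n} :=
  [set y | [set x; y] \in G].

Definition kelmans n (x y : 'I_n) (G : graph n) : graph n :=
  let S := nbhd G y :\: (nbhd G x :|: [set x]) in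
  (G :\: [set [set y; z] | z in S]) :|: [set [set x; z] | z in S].

Definition kelmans_step n (G : graph n) : graph n :=
  match [pick p : 'I_n * 'I_n | (p.1 < p.2)%N && (kelmans p.1 p.2 G != G)] with
  | Some p => kelmans p.1 p.2 G
  | None => G
  end.

(* K(G): iterate until invariant. Each non-trivial step strictly decreases
   sum over edges of the sum of vertex indices (bounded by 2 n^3), so
   2 n^3 + 1 iterations reach the fixed point. *)
Definition kelmans_closure n (G : graph n) : graph n :=
  iter (2 * n ^ 3).+1 (@kelmans_step n) G.

Local Open Scope ring_scope.
Definition adjmx n (G : graph n) : 'M[algC]_n :=
  \matrix_(i, j) (([set i; j] \in G) : nat)%:R.

Definition spec_radius_gt n (G : graph n) (c : algC) : Prop :=
  exists lam : algC, eigenvalue (adjmx G) lam /\ c < `|lam|.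

(* {a, b} is an edge, a b given as 1-based labels in [n] *)
Definition has_edge n (G : graph n) (a b : nat) : Prop :=
  exists u v : 'I_n, ((val u).+1 = a)%N /\ ((val v).+1 = b)%N /\ [set u; v] \in G.

(* Main.v *)
Require Import Defs.
From HB Require Import structures.
From mathcomp Require Import all_boot all_order all_algebra all_field.
From mathcomp Require Import fingroup perm.
From mathcomp Require Import zify ring lra.
Import Order.TTheory GRing.Theory Num.Theory.
Set Implicit Arguments. Unset Strict Implicit. Unset Printing Implicit Defensive.

Lemma bigU_set R idx (op : Monoid.com_law idx) (I : finType) (A B : {set I}) (F : I -> R) :
  [disjoint A & B] ->
  \big[op/idx]_(i in A :|: B) F i = op (\big[op/idx]_(i in A) F i) (\big[op/idx]_(i in B) F i).
Proof. by move=> d; rewrite -bigU //; apply: eq_bigl => i; rewrite !inE. Qed.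

Section Basic.
Variable n : nat.
Implicit Types (G : graph n) (x y z : 'I_n).

Definition kS G x y := nbhd G y :\: (nbhd G x :|: [set x]).

Lemma inS G x y z :
  (z \in kS G x y) = [&& [set y; z] \in G, [set x; z] \notin G & z != x].
Proof. by rewrite /kS /nbhd !inE negb_or andbC andbA. Qed.

Lemma in_nbhd G x z : (z \in nbhd G x) = ([set x; z] \in G).
Proof. by rewrite /nbhd inE. Qed.

Lemma set2_inj (a : 'I_n) : injective (fun z : 'I_n => [set a; z]).
Proof.
move=> z1 z2 /= E.
have : z1 \in [set a; z2] by rewrite -E set22.
case/set2P => [h1|//]; subst z1.
have : z2 \in [set a; a] by rewrite E set22.
by case/set2P.
Qed.

Lemma kelmans_sum R (idx : R) (op : Monoid.com_law idx) G x y (F : {set 'I_n} -> R) :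
  op (\big[op/idx]_(e in kelmans x y G) F e) (\big[op/idx]_(z in kS G x y) F [set y; z])
  = op (\big[op/idx]_(e in G) F e) (\big[op/idx]_(z in kS G x y) F [set x; z]).
Proof.
have -> : kelmans x y G = (G :\: [set [set y; z] | z in kS G x y]) :|: [set [set x; z] | z in kS G x y] by [].
set S := kS G x y.
set D := [set [set y; z] | z in S].
set N := [set [set x; z] | z in S].
have DG : D \subset G.
  by apply/subsetP => e /imsetP [z zS ->]; move: zS; rewrite inS => /and3P [].
have dis : [disjoint (G :\: D) & N].
  rewrite -setI_eq0; apply/eqP/setP => e; rewrite !inE.
  apply/negbTE/negP => /andP [/andP [_ eG] /imsetP [z zS ez]].
  by move: zS; rewrite inS -ez eG /= andbF.
rewrite bigU_set // (@big_setID _ _ _ _ G D) (setIidPr DG).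
rewrite /D /N !big_imset /=; try by move=> a b _ _; apply: set2_inj.
by rewrite Monoid.mulmAC (Monoid.mulmC op (\big[op/idx]_(i in S) F [set y; i])).
Qed.


Lemma simple_no1 G u : simple_graph G -> [set u] \notin G.
Proof. by move=> sG; apply/negP => /sG; rewrite cards1. Qed.

Lemma simple_neq G u v : simple_graph G -> [set u; v] \in G -> u != v.
Proof.
move=> sG uvG; apply/negP=> /eqP E; subst v.
by rewrite setUid in uvG; move: (simple_no1 u sG); rewrite uvG.
Qed.

Lemma kelmans_simple G x y : simple_graph G -> simple_graph (kelmans x y G).
Proof.
move=> sG e; rewrite /kelmans !inE => /orP [/andP [_ /sG //]|/imsetP [z zS ->]].
move: zS; rewrite -/(kS G x y) inS => /and3P [_ _ zx].
by rewrite cards2 eq_sym zx.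
Qed.

Lemma kelmans_card G x y : #|kelmans x y G| = #|G|.
Proof.
have := kelmans_sum addn G x y (fun _ => 1%N).
by rewrite !sum1_card => /addIn.
Qed.

Lemma kS_empty G x y : kS G x y = set0 -> kelmans x y G = G.
Proof. by rewrite /kelmans -/(kS G x y) => ->; rewrite !imset0 setD0 setU0. Qed.

Definition fixedg G := forall x y : 'I_n, (x < y)%N -> kelmans x y G = G.

Lemma fixed_kS G x y : fixedg G -> (x < y)%N -> kS G x y = set0.
Proof.
move=> fG xy; apply/setP => z; rewrite in_set0; apply/negP => zS.
have := fG x y xy; rewrite /kelmans -/(kS G x y) => E.
have : [set x; z] \in kelmans x y G.
  by rewrite /kelmans -/(kS G x y) !inE; apply/orP; right; apply/imsetP; exists z.
by rewrite fG //; move: zS; rewrite inS => /and3P [_ /negbTE ->].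
Qed.

Lemma fixed_nb G x y w : fixedg G -> (x < y)%N -> [set y; w] \in G -> w != x -> [set x; w] \in G.
Proof.
move=> fG xy yw wx; apply/negPn/negP => xw.
have : w \in kS G x y by rewrite inS yw xw wx.
by rewrite fixed_kS // inE.
Qed.

Lemma shift G (a b u v : 'I_n) : fixedg G -> (a < b)%N -> [set u; v] \in G ->
  (a <= u)%N -> (b <= v)%N -> [set a; b] \in G.
Proof.
move=> fG ab uv au bv.
have av : [set a; v] \in G.
  case: (eqVneq a u) => [->//|nau].
  apply: (fixed_nb fG _ uv); first by rewrite ltn_neqAle au andbT; exact: nau.
  by apply/eqP => E; subst v; move: (leq_trans ab bv); rewrite ltnn.
case: (eqVneq b v) => [->//|nbv].
rewrite setUC; apply: (fixed_nb (y := v) fG _ _); first by rewrite ltn_neqAle bv andbT; exact: nbv.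
  by rewrite setUC.
by rewrite neq_ltn ab.
Qed.


Definition phi G : nat := \sum_(e in G) \sum_(i in e) (i : nat).

Lemma sum_set2 (u v : 'I_n) : u != v -> \sum_(i in [set u; v]) (i : nat) = (u + v)%N.
Proof.
move=> uv; rewrite big_setU1 ?big_set1 // inE; exact: uv.
Qed.

Lemma phi_dec G x y : simple_graph G -> (x < y)%N -> kelmans x y G != G ->
  (phi (kelmans x y G) < phi G)%N.
Proof.
move=> sG xy ne.
have E : (phi (kelmans x y G) + \sum_(z in kS G x y) \sum_(i in [set y; z]) (i : nat)
   = phi G + \sum_(z in kS G x y) \sum_(i in [set x; z]) (i : nat))%N.
  exact: (kelmans_sum addn G x y (fun e => \sum_(i in e) (i : nat))).
have [z0 z0S] : exists z0, z0 \in kS G x y.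
  case: (set_0Vmem (kS G x y)) => [K|[z zS]]; last by exists z.
  by rewrite (kS_empty K) eqxx in ne.
have h1 : forall z, z \in kS G x y -> \sum_(i in [set y; z]) (i : nat) = (y + z)%N.
  move=> z; rewrite inS => /and3P [yz _ _]; apply: sum_set2; exact: (simple_neq sG yz).
have h2 : forall z, z \in kS G x y -> \sum_(i in [set x; z]) (i : nat) = (x + z)%N.
  move=> z; rewrite inS => /and3P [_ _ zx]; apply: sum_set2; by rewrite eq_sym.
rewrite (eq_bigr _ h1) (eq_bigr _ h2) in E.
rewrite !(big_setD1 z0 z0S) in E.
have : (\sum_(i in kS G x y :\ z0) (x + i) <= \sum_(i in kS G x y :\ z0) (y + i))%N.
  by apply: leq_sum => i _; rewrite leq_add2r ltnW.
move: E; set S1 := \sum_(i in _ :\ z0) (y + _); set S2 := \sum_(i in _ :\ z0) (x + _).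
move=> E H. have E2 : (phi (kelmans x y G) + ((y + z0) + S1) = phi G + ((x + z0) + S2))%N := E. lia.
Qed.

Lemma phi_bound G : simple_graph G -> (phi G <= 2 * n ^ 3)%N.
Proof.
move=> sG.
have h : (phi G <= \sum_(e in G) (2 * n))%N.
  apply: leq_sum => e /sG ce.
  apply: (@leq_trans (\sum_(i in e) n)); first by apply: leq_sum => i _; apply: ltnW.
  by rewrite sum_nat_const ce.
rewrite sum_nat_const in h.
have cG : (#|G| <= 'C(n, 2))%N.
  rewrite -[X in 'C(X, _)]card_ord -card_draws; apply: subset_leq_card.
  by apply/subsetP => e /sG ce; rewrite inE ce.
have : ('C(n, 2) <= n * n)%N.
  rewrite bin2; apply: (leq_trans (half_leq (leq_mul (leqnn n) (leq_pred n)))).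
  by rewrite -divn2 leq_div.
nia.
Qed.


Lemma step_cases G : kelmans_step G = G \/ exists x y : 'I_n,
  [/\ (x < y)%N, kelmans x y G != G & kelmans_step G = kelmans x y G].
Proof.
rewrite /kelmans_step; case: pickP => [[x y] /= /andP [xy ne]|_]; last by left.
by right; exists x, y.
Qed.

Lemma step_fixed G : kelmans_step G = G -> fixedg G.
Proof.
rewrite /kelmans_step; case: pickP => [[x y] /= /andP [xy ne] E|none _].
  by rewrite E eqxx in ne.
move=> x y xy; apply/eqP; have := none (x, y); rewrite /= xy /=; exact: negbFE.
Qed.

Lemma step_simple G : simple_graph G -> simple_graph (kelmans_step G).
Proof.
move=> sG; case: (step_cases G) => [->//|[x [y [_ _ ->]]]]; exact: kelmans_simple.
Qed.

Lemma step_card G : #|kelmans_step G| = #|G|.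
Proof.
case: (step_cases G) => [->//|[x [y [_ _ ->]]]]; exact: kelmans_card.
Qed.

Lemma closure_simple G : simple_graph G -> simple_graph (kelmans_closure G).
Proof.
rewrite /kelmans_closure; elim: (2 * n ^ 3).+1 => [//|k IH] sG /=.
exact: step_simple (IH sG).
Qed.

Lemma closure_card G : #|kelmans_closure G| = #|G|.
Proof.
rewrite /kelmans_closure; elim: (2 * n ^ 3).+1 => [//|k IH] /=.
by rewrite step_card.
Qed.

Lemma closure_fixed G : simple_graph G -> fixedg (kelmans_closure G).
Proof.
move=> sG.
pose h k := iter k (@kelmans_step n) G.
have simp : forall k, simple_graph (h k).
  elim=> [//|k IH]; exact: step_simple.
have key : forall k, kelmans_step (h k) = h k \/ (phi (h k) + k <= phi G)%N.
  elim=> [|k IH]; first by right; rewrite addn0.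
  have hS : h k.+1 = kelmans_step (h k) by [].
  case: IH => [E|IH]; first by left; rewrite hS E E.
  case: (step_cases (h k)) => [E|[x [y [xy ne E]]]]; first by left; rewrite hS E E.
  right; have := phi_dec (simp k) xy ne; rewrite -E -hS => lt; lia.
case: (key (2 * n ^ 3).+1) => [E|]; first exact: step_fixed E.
have := phi_bound sG; lia.
Qed.

End Basic.

Section Spec.
Variable n : nat.
Implicit Types (G : graph n) (x y z : 'I_n).
Local Open Scope ring_scope.

Definition W G (f : 'I_n -> algC) := \sum_(e in G) \prod_(i in e) f i.

Lemma two_elems (e : {set 'I_n}) a b : #|e| = 2%N -> a \in e -> b \in e -> a != b -> e = [set a; b].
Proof.
move=> ce ae be ab; apply/eqP; rewrite eq_sym eqEcard; apply/andP; split.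
  by apply/subsetP => i /set2P [->|->].
by rewrite ce cards2 ab.
Qed.

Lemma prod2 (f : 'I_n -> algC) a b : a != b -> \prod_(i in [set a; b]) f i = f a * f b.
Proof. by move=> ab; rewrite big_setU1 ?big_set1 // inE. Qed.

Lemma sum_star G a b (F : {set 'I_n} -> algC) : simple_graph G -> a != b ->
  \sum_(e in G | (a \in e) && (b \notin e)) F e = \sum_(z in nbhd G a :\ b) F [set a; z].
Proof.
move=> sG ab; rewrite -(@big_imset _ _ _ _ _ (fun z => [set a; z]) (nbhd G a :\ b) F) /=; last by move=> u v _ _; apply: set2_inj.
apply: eq_bigl => e; apply/idP/idP.
  move=> /andP [eG /andP [ae be]].
  have /cards2P [u [v [uv E]]] : #|e| == 2%N by rewrite (sG e eG).
  have [z [Ez za]] : exists z, e = [set a; z] /\ z != a.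
    move: ae; rewrite E => /set2P [au|av].
      by exists v; rewrite au eq_sym; split.
    by exists u; rewrite av setUC; split.
  apply/imsetP; exists z => //; rewrite in_setD1 in_nbhd -Ez eG andbT.
  by apply/negP => /eqP zb; move: be; rewrite Ez zb set22.
move=> /imsetP [z]; rewrite in_setD1 in_nbhd => /andP [zb azG] ->.
by rewrite azG set21 /= !inE negb_or eq_sym ab eq_sym zb.
Qed.

Lemma sum_both G a b (F : {set 'I_n} -> algC) : simple_graph G -> a != b ->
  \sum_(e in G | (a \in e) && (b \in e)) F e = if [set a; b] \in G then F [set a; b] else 0.
Proof.
move=> sG ab; case: ifP => h.
  rewrite (big_pred1 [set a; b]) // => e /=; apply/idP/idP.
    move=> /andP [eG /andP [ae be]]; by rewrite (two_elems (sG e eG) ae be ab).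
  by move=> /eqP ->; rewrite h set21 set22.
rewrite big_pred0 // => e; apply/negP => /andP [eG /andP [ae be]].
by move: h; rewrite -(two_elems (sG e eG) ae be ab) eG.
Qed.

Definition W0 G x y (f : 'I_n -> algC) :=
  \sum_(e in G | (x \notin e) && (y \notin e)) \prod_(i in e) f i.

Lemma W_decomp G x y f : simple_graph G -> x != y ->
  W G f = W0 G x y f + f x * \sum_(z in nbhd G x :\ y) f z
        + f y * \sum_(z in nbhd G y :\ x) f z
        + (if [set x; y] \in G then f x * f y else 0).
Proof.
move=> sG xy.
rewrite /W (bigID (fun e : {set 'I_n} => x \in e)) /= (bigID (fun e : {set 'I_n} => y \in e)) /=.
rewrite [X in _ + X](bigID (fun e : {set 'I_n} => y \in e)) /=.
have e1 : \sum_(e in G | (x \in e) && (y \in e)) \prod_(i in e) f i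
   = if [set x; y] \in G then f x * f y else 0.
  by rewrite sum_both //; case: ifP => // _; rewrite prod2.
have e2 : \sum_(e in G | (x \in e) && (y \notin e)) \prod_(i in e) f i
   = f x * \sum_(z in nbhd G x :\ y) f z.
  rewrite sum_star // big_distrr /=; apply: eq_bigr => z; rewrite in_setD1 in_nbhd => /andP [_ h].
  by rewrite prod2 // (simple_neq sG h).
have e3 : \sum_(e in G | (y \in e) && (x \notin e)) \prod_(i in e) f i
   = f y * \sum_(z in nbhd G y :\ x) f z.
  rewrite sum_star 1?eq_sym // big_distrr /=; apply: eq_bigr => z; rewrite in_setD1 in_nbhd => /andP [_ h].
  by rewrite prod2 // (simple_neq sG h).
rewrite -e1 -e2 -e3 /W0.
set F := fun e : {set 'I_n} => \prod_(i in e) f i.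
have q1 : \sum_(i | (i \in G) && (x \in i) && (y \in i)) F i = \sum_(e in G | (x \in e) && (y \in e)) F e.
  by apply: eq_bigl => e; rewrite andbA.
have q2 : \sum_(i | (i \in G) && (x \in i) && (y \notin i)) F i = \sum_(e in G | (x \in e) && (y \notin e)) F e.
  by apply: eq_bigl => e; rewrite andbA.
have q3 : \sum_(i | (i \in G) && (x \notin i) && (y \in i)) F i = \sum_(e in G | (y \in e) && (x \notin e)) F e.
  by apply: eq_bigl => e; rewrite -andbA (andbC (x \notin e)).
have q4 : \sum_(i | (i \in G) && (x \notin i) && (y \notin i)) F i = \sum_(e in G | (x \notin e) && (y \notin e)) F e.
  by apply: eq_bigl => e; rewrite andbA.
rewrite q1 q2 q3 q4; ring.
Qed.


Lemma kel_W G x y (h : 'I_n -> algC) : simple_graph G ->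
  W (kelmans x y G) h + h y * \sum_(z in kS G x y) h z
  = W G h + h x * \sum_(z in kS G x y) h z.
Proof.
move=> sG.
have E := kelmans_sum +%R G x y (fun e => \prod_(i in e) h i).
have e1 : \sum_(z in kS G x y) \prod_(i in [set y; z]) h i = h y * \sum_(z in kS G x y) h z.
  rewrite big_distrr; apply: eq_bigr => z.
  by rewrite inS => /and3P [] /(simple_neq sG) yz _ _; rewrite prod2.
have e2 : \sum_(z in kS G x y) \prod_(i in [set x; z]) h i = h x * \sum_(z in kS G x y) h z.
  rewrite big_distrr; apply: eq_bigr => z.
  by rewrite inS => /and3P [] _ _ zx; rewrite prod2 // eq_sym.
by rewrite -e1 -e2; exact: E.
Qed.

Lemma SeqBA G x y : simple_graph G -> (nbhd G y :\ x) :\: (nbhd G x :\ y) = kS G x y.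
Proof.
move=> sG; apply/setP => z; rewrite inS !inE.
case yzG: ([set y; z] \in G); last by rewrite !andbF.
have := simple_neq sG yzG; rewrite eq_sym => -> /=.
by rewrite andbT andbC.
Qed.

Lemma kel_mono G x y (f : 'I_n -> algC) : simple_graph G -> x != y -> (forall i, 0 <= f i) ->
  exists g : 'I_n -> algC, [/\ forall i, 0 <= g i, \sum_i g i ^+ 2 = \sum_i f i ^+ 2
     & W G f <= W (kelmans x y G) g].
Proof.
move=> sG xy f0.
have sS0 : forall h : 'I_n -> algC, (forall i, 0 <= h i) -> forall (A : {set 'I_n}), 0 <= \sum_(z in A) h z.
  by move=> h h0 A; apply: sumr_ge0 => i _.
have /orP [fyx|fxy] : (f y <= f x) || (f x <= f y).
  by apply: real_leVge; apply: ger0_real.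
  exists f; split => //.
  have := kel_W x y f sG.
  move=> E; rewrite -subr_ge0.
  have -> : W (kelmans x y G) f - W G f = (f x - f y) * \sum_(z in kS G x y) f z.
    by rewrite -(addrK (f y * \sum_(z in kS G x y) f z) (W (kelmans x y G) f)) E; ring.
  by apply: mulr_ge0; [rewrite subr_ge0 | apply: sS0].
pose g i := f (tperm x y i).
have g0 : forall i, 0 <= g i by move=> i; apply: f0.
exists g; split => //.
  by rewrite [RHS](reindex_inj (@perm_inj _ (tperm x y))).
have gx : g x = f y by rewrite /g tpermL.
have gy : g y = f x by rewrite /g tpermR.
have gz : forall z, z != x -> z != y -> g z = f z.
  by move=> z zx zy; rewrite /g tpermD // eq_sym.
have W0eq : W0 G x y g = W0 G x y f.
  apply: eq_bigr => e /andP [_ /andP [xe ye]]; apply: eq_bigr => i ie; apply: gz.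
    by apply/eqP => E; move: xe; rewrite -E ie.
  by apply/eqP => E; move: ye; rewrite -E ie.
have sA : \sum_(z in nbhd G x :\ y) g z = \sum_(z in nbhd G x :\ y) f z.
  apply: eq_bigr => z; rewrite in_setD1 in_nbhd => /andP [zy /(simple_neq sG) h].
  by apply: gz => //; rewrite eq_sym.
have sB : \sum_(z in nbhd G y :\ x) g z = \sum_(z in nbhd G y :\ x) f z.
  apply: eq_bigr => z; rewrite in_setD1 in_nbhd => /andP [zx /(simple_neq sG) h].
  by apply: gz => //; rewrite eq_sym.
have sS : \sum_(z in kS G x y) g z = \sum_(z in kS G x y) f z.
  apply: eq_bigr => z; rewrite inS => /and3P [/(simple_neq sG) h _ zx].
  by apply: gz => //; rewrite eq_sym.
have E := kel_W x y g sG.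
rewrite gx gy sS in E.
have dG := W_decomp f sG xy.
have dGg := W_decomp g sG xy.
rewrite gx gy W0eq sA sB in dGg.
set A := nbhd G x :\ y. set B := nbhd G y :\ x.
have splA : \sum_(i in A) f i = \sum_(i in A :&: B) f i + \sum_(i in A :\: B) f i
  := @big_setID _ _ _ _ A B f.
have splB : \sum_(i in B) f i = \sum_(i in B :&: A) f i + \sum_(i in B :\: A) f i
  := @big_setID _ _ _ _ B A f.
rewrite SeqBA // setIC in splB.
rewrite -subr_ge0.
have -> : W (kelmans x y G) g - W G f = (f y - f x) * \sum_(i in (nbhd G x :\ y) :\: (nbhd G y :\ x)) f i.
  rewrite -(addrK (f x * \sum_(z in kS G x y) f z) (W (kelmans x y G) g)) E dGg dG splA splB.
  case: ifP => _; ring.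
by apply: mulr_ge0; [rewrite subr_ge0 | apply: sS0].
Qed.


Lemma step_mono G (f : 'I_n -> algC) : simple_graph G -> (forall i, 0 <= f i) ->
  exists g : 'I_n -> algC, [/\ forall i, 0 <= g i, \sum_i g i ^+ 2 = \sum_i f i ^+ 2
     & W G f <= W (kelmans_step G) g].
Proof.
move=> sG f0; case: (step_cases G) => [->|[x [y [xy _ ->]]]]; first by exists f.
by apply: kel_mono => //; rewrite neq_ltn xy.
Qed.

Lemma closure_mono G (f : 'I_n -> algC) : simple_graph G -> (forall i, 0 <= f i) ->
  exists g : 'I_n -> algC, [/\ forall i, 0 <= g i, \sum_i g i ^+ 2 = \sum_i f i ^+ 2
     & W G f <= W (kelmans_closure G) g].
Proof.
move=> sG f0; rewrite /kelmans_closure; elim: (2 * n ^ 3).+1 => [|k [g [g0 gs gW]]].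
  by exists f.
have sk : simple_graph (iter k (@kelmans_step n) G).
  by elim: k {g g0 gs gW} => [//|k IH]; apply: step_simple.
have [h [h0 hs hW]] := step_mono sk g0.
by exists h; split => //; [rewrite hs | apply: le_trans hW].
Qed.

Definition Q G (f : 'I_n -> algC) :=
  \sum_i \sum_j (([set i; j] \in G) : nat)%:R * f i * f j.

Lemma set2_eq (a b u v : 'I_n) : [set a; b] = [set u; v] -> u != v ->
  (a = u /\ b = v) \/ (a = v /\ b = u).
Proof.
move=> E uv.
have ha : a \in [set u; v] by rewrite -E set21.
have hb : b \in [set u; v] by rewrite -E set22.
have hu : u \in [set a; b] by rewrite E set21.
have hv : v \in [set a; b] by rewrite E set22.
case/set2P: ha => ?; case/set2P: hb => ?; subst a b; try by [left|right].
  by case/set2P: hv => /eqP; rewrite eq_sym (negbTE uv).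
by case/set2P: hu => /eqP; rewrite (negbTE uv).
Qed.

Lemma QW G f : simple_graph G -> Q G f = W G f *+ 2.
Proof.
move=> sG.
rewrite /Q pair_bigA /=.
rewrite (bigID (fun p : 'I_n * 'I_n => [set p.1; p.2] \in G)) /=.
rewrite [X in _ + X]big1 ?addr0; last by move=> p /negbTE ->; rewrite !mul0r.
rewrite (partition_big (fun p : 'I_n * 'I_n => [set p.1; p.2]) (mem G)) //=.
rewrite /W -sumrMnl; apply: eq_bigr => e eG.
have /cards2P [u [v [uv Ee]]] : #|e| == 2%N by rewrite (sG e eG).
rewrite (bigD1 (u, v)) /=; last by rewrite -Ee eG eqxx.
rewrite (bigD1 (v, u)) /=; last first.
  by rewrite setUC -Ee eG eqxx /= -pair_eqE /= negb_and eq_sym uv.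
rewrite big1 ?addr0; last first.
  move=> [a b] /andP [/andP [/andP [_ /eqP abe] ne1] ne2]; simpl in abe.
  rewrite Ee in abe; move: ne1 ne2; case: (set2_eq abe uv) => [[-> ->]|[-> ->]];
  by rewrite eqxx ?andbF.
by rewrite [[set v; u]]setUC -Ee eG Ee prod2 // mulr2n !mul1r [f v * f u]mulrC.
Qed.


Lemma eig_Q G lam : eigenvalue (adjmx G) lam ->
  exists f : 'I_n -> algC, [/\ forall i, 0 <= f i, 0 < \sum_i f i ^+ 2
    & `|lam| * \sum_i f i ^+ 2 <= Q G f].
Proof.
case/eigenvalueP => v vA v0.
pose f i := `|v 0 i|.
have s0 : 0 <= \sum_i f i ^+ 2 by apply: sumr_ge0 => i _; apply: exprn_ge0; apply: normr_ge0.
exists f; split.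
- by move=> i; apply: normr_ge0.
- rewrite lt_def s0 andbT; apply/negP => /eqP E.
  have H := psumr_eq0P (fun i _ => exprn_ge0 2 (normr_ge0 (v 0 i))) E.
  move/negP: v0; apply; apply/eqP/rowP => i; rewrite !mxE.
  by have /eqP := H i isT; rewrite expf_eq0 /= normr_eq0 => /eqP.
have key : lam * \sum_j f j ^+ 2
    = \sum_j \sum_i v 0 i * adjmx G i j * (v 0 j)^*.
  rewrite mulr_sumr; apply: eq_bigr => j _; rewrite /f normCK mulrA.
  have := congr1 (fun M : 'M[algC]_(1, n) => M 0 j) vA; rewrite !mxE => <-.
  by rewrite big_distrl.
rewrite -(ger0_norm s0) -normrM key.
apply: (le_trans (ler_norm_sum _ _ _)).
rewrite /Q exchange_big /=; apply: ler_sum => j _.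
apply: (le_trans (ler_norm_sum _ _ _)); apply: ler_sum => i _.
by rewrite !normrM norm_conjC /adjmx mxE normr_nat -mulrA [_ * f i]mulrC mulrA.
Qed.


Lemma amgm (a b cu cv : algC) : 0 <= a -> 0 <= b -> 0 < cu -> 0 < cv ->
  a * b *+ 2 <= cv / cu * a ^+ 2 + cu / cv * b ^+ 2.
Proof.
move=> a0 b0 cu0 cv0.
have cun : cu != 0 by rewrite gt_eqF.
have cvn : cv != 0 by rewrite gt_eqF.
rewrite -subr_ge0.
have -> : cv / cu * a ^+ 2 + cu / cv * b ^+ 2 - a * b *+ 2 = (cv * a - cu * b) ^+ 2 / (cu * cv).
  by field; apply/andP; split.
apply: divr_ge0; last by apply: mulr_ge0; apply: ltW.
apply: real_exprn_even_ge0 => //; apply: rpredB; apply: rpredM; apply: ger0_real => //; exact: ltW.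
Qed.

Lemma Q_weight (H : graph n) (c : 'I_n -> nat) (mu : nat) (g : 'I_n -> algC) :
  (forall i, 0 < c i)%N ->
  (forall u, \sum_v ([set u; v] \in H) * c v <= mu * c u)%N ->
  (forall i, 0 <= g i) -> Q H g <= mu%:R * \sum_i g i ^+ 2.
Proof.
move=> c0 hc g0.
pose a u v : algC := (([set u; v] \in H) : nat)%:R.
pose C u : algC := (c u)%:R.
have C0 : forall u, 0 < C u by move=> u; rewrite ltr0n.
have a0 : forall u v, 0 <= a u v by move=> u v; apply: ler0n.
have asym : forall u v, a u v = a v u by move=> u v; rewrite /a setUC.
pose T := \sum_u \sum_v a u v * (C v / C u * g u ^+ 2).
have h1 : Q H g *+ 2 <= T *+ 2.
  have -> : T *+ 2 = T + \sum_u \sum_v a u v * (C u / C v * g v ^+ 2).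
    rewrite mulr2n; congr (_ + _); rewrite /T exchange_big /=.
    by apply: eq_bigr => v _; apply: eq_bigr => u _; rewrite asym.
  rewrite /Q -sumrMnl /T -big_split /=; apply: ler_sum => u _.
  rewrite -sumrMnl -big_split /=; apply: ler_sum => v _.
  rewrite -mulrDr -mulrA -mulrnAr; apply: ler_wpM2l => //.
  exact: amgm.
rewrite lerMn2r /= in h1; apply: (le_trans h1).
rewrite /T mulr_sumr; apply: ler_sum => u _.
have -> : \sum_v a u v * (C v / C u * g u ^+ 2) = (g u ^+ 2 / C u) * \sum_v a u v * C v.
  rewrite mulr_sumr; apply: eq_bigr => v _; ring.
have hs : \sum_v a u v * C v <= mu%:R * C u.
  rewrite /a /C -natrM; under eq_bigr do rewrite -natrM.
  by rewrite -natr_sum ler_nat.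
apply: (le_trans (ler_wpM2l _ hs)).
  by apply: divr_ge0; [apply: exprn_ge0 | apply: ltW].
have Cn : C u != 0 by rewrite gt_eqF.
have -> : g u ^+ 2 / C u * (mu%:R * C u) = mu%:R * g u ^+ 2 by field.
by [].
Qed.

End Spec.

Lemma sum_range n lo hi (F : nat -> nat) : lo <= hi -> hi <= n ->
  \sum_(i < n | lo <= i < hi) F i = \sum_(lo <= i < hi) F i.
Proof.
move=> lh hn.
rewrite -(big_mkord (fun i => lo <= i < hi)) -(big_nat_widen _ _ _ _ _ hn).
rewrite (@big_cat_nat _ _ _ lo) //  /=.
rewrite big_nat_cond big_pred0 ?add0n; last by move=> i; apply/negP => /andP [/andP [_ il] li]; lia.
rewrite big_nat_cond [RHS]big_nat_cond; apply: eq_bigl => i; rewrite andbT; case: (lo <= i) => //=. by rewrite andbT.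
Qed.

Lemma sum_const_range lo hi (F : nat -> nat) c : (forall i, lo <= i < hi -> F i = c) ->
  \sum_(lo <= i < hi) F i = (hi - lo) * c.
Proof.
move=> h; rewrite -sum_nat_const_nat big_nat_cond [RHS]big_nat_cond.
by apply: eq_bigr => i /andP [hi' _]; apply: h.
Qed.

Section Weights.
Variables (n a0 b0 cL cM cT : nat).
Hypothesis (ab : a0 <= b0) (bn : b0 <= n).

Definition cw (i : nat) : nat := if i < a0 then cL else if i < b0 then cM else cT.

Lemma sum_a0 : \sum_(i < n | 0 <= i < a0) cw i = a0 * cL.
Proof.
rewrite sum_range ?leq0n //; last exact: leq_trans bn.
rewrite (sum_const_range (c := cL)) ?subn0 // => i /andP [_ ia].
by rewrite /cw ia.
Qed.

Lemma sum_b0 : \sum_(i < n | 0 <= i < b0) cw i = a0 * cL + (b0 - a0) * cM.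
Proof.
rewrite sum_range ?leq0n // (@big_cat_nat _ _ _ a0) //  /=.
rewrite (sum_const_range (c := cL)) ?subn0; last by move=> i /andP [_ ia]; rewrite /cw ia.
rewrite (sum_const_range (c := cM)) // => i /andP [ai ib].
by rewrite /cw ib ltnNge ai.
Qed.

Lemma sum_n : \sum_(i < n | 0 <= i < n) cw i = a0 * cL + (b0 - a0) * cM + (n - b0) * cT.
Proof.
rewrite sum_range ?leq0n // (@big_cat_nat _ _ _ b0) //  /=.
rewrite (@big_cat_nat _ _ _ a0) //  /=.
rewrite (sum_const_range (c := cL)) ?subn0; last by move=> i /andP [_ ia]; rewrite /cw ia.
rewrite (sum_const_range (c := cM)); last by move=> i /andP [ai ib]; rewrite /cw ib ltnNge ai.
rewrite (sum_const_range (c := cT)) // => i /andP [bi _].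
by rewrite /cw ltnNge (leq_trans ab bi) ltnNge bi.
Qed.

End Weights.

Lemma sum_le_pred n (P : pred 'I_n) (F : 'I_n -> nat) (b : 'I_n -> bool) :
  (forall v, b v -> P v) -> \sum_v b v * F v <= \sum_(v | P v) F v.
Proof.
move=> h; rewrite [X in _ <= X]big_mkcond /=; apply: leq_sum => v _.
by case bv: (b v); [rewrite mul1n (h v bv) | rewrite mul0n].
Qed.

Lemma vertex_bound n (H : graph n) a0 b0 cL cM cT mu :
  a0 < b0 -> b0 <= n -> simple_graph H ->
  (forall u v : 'I_n, [set u; v] \in H -> ~~ ((a0 <= u) && (b0 <= v))) ->
  a0 * cL <= mu * cT ->
  a0 * cL + (b0 - a0) * cM <= mu * cM + cM ->
  (0 < a0 -> a0 * cL + (b0 - a0) * cM + (n - b0) * cT <= mu * cL + cL) ->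
  forall u : 'I_n, \sum_v ([set u; v] \in H) * cw a0 b0 cL cM cT v <= mu * cw a0 b0 cL cM cT u.
Proof.
move=> ab bn sH miss hT hM hL u.
have ab' : a0 <= b0 by apply: ltnW.
case: (leqP b0 u) => bu.
  have -> : cw a0 b0 cL cM cT u = cT by rewrite /cw ltnNge (leq_trans ab' bu) ltnNge bu.
  apply: (leq_trans (sum_le_pred (P := fun v : 'I_n => 0 <= v < a0) _ _)).
    move=> v uv /=; rewrite ltnNge; apply/negP => av.
    by move: (miss v u); rewrite setUC uv av bu => /(_ isT).
  by rewrite sum_a0.
case: (leqP a0 u) => au.
  have cwu : cw a0 b0 cL cM cT u = cM by rewrite /cw ltnNge au bu.
  rewrite cwu.
  apply: (leq_trans (sum_le_pred (P := fun v : 'I_n => (0 <= v < b0) && (v != u)) _ _)).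
    move=> v uv /=; rewrite eq_sym (simple_neq sH uv) andbT ltnNge; apply/negP => bv.
    by move: (miss u v); rewrite uv au bv => /(_ isT).
  have := sum_b0 cL cM cT ab' bn; rewrite (bigD1 u) /=; last by rewrite bu.
  rewrite cwu => E; rewrite -(leq_add2l cM) E; lia.
have cwu : cw a0 b0 cL cM cT u = cL by rewrite /cw au.
rewrite cwu.
apply: (leq_trans (sum_le_pred (P := fun v : 'I_n => (0 <= v < n) && (v != u)) _ _)).
  by move=> v uv /=; rewrite eq_sym (simple_neq sH uv) andbT ltn_ord.
have := sum_n cL cM cT ab' bn; rewrite (bigD1 u) /=; last by rewrite ltn_ord.
have := hL (leq_ltn_trans (leq0n u) au).
by rewrite cwu => h1 E; rewrite -(leq_add2l cL) E; lia.
Qed.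

Section Final.
Variable n : nat.
Implicit Types (G H : graph n).
Local Open Scope ring_scope.

Definition missing H a0 b0 := forall u v : 'I_n, [set u; v] \in H -> ~~ ((a0 <= u) && (b0 <= v))%N.

Lemma spec_bound H a0 b0 cL cM cT (g : 'I_n -> algC) :
  simple_graph H -> (a0 < b0)%N -> (b0 <= n)%N -> missing H a0 b0 ->
  (0 < cL)%N -> (0 < cM)%N -> (0 < cT)%N ->
  (a0 * cL <= (n - 2) * cT)%N ->
  (a0 * cL + (b0 - a0) * cM <= (n - 2) * cM + cM)%N ->
  ((0 < a0)%N -> a0 * cL + (b0 - a0) * cM + (n - b0) * cT <= (n - 2) * cL + cL)%N ->
  (forall i, 0 <= g i) -> (Q H g <= (n - 2)%:R * \sum_i g i ^+ 2)%R.
Proof.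
move=> sH ab bn miss pL pM pT hT hM hL g0.
apply: (Q_weight (c := fun i : 'I_n => cw a0 b0 cL cM cT i)) => //.
  by move=> i; rewrite /cw; case: ifP => // _; case: ifP.
exact: vertex_bound.
Qed.

Lemma caseA H (g : 'I_n -> algC) : (4 <= n)%N -> simple_graph H -> missing H 0 (n - 1) ->
  (forall i, 0 <= g i) -> (Q H g <= (n - 2)%:R * \sum_i g i ^+ 2)%R.
Proof.
move=> n4 sH miss g0; apply: (spec_bound (cL := 1) (cM := 1) (cT := 1) sH _ _ miss) => //; lia.
Qed.

Lemma caseB H (g : 'I_n -> algC) : (4 <= n)%N -> simple_graph H -> missing H 1 (n - 2) ->
  (forall i, 0 <= g i) -> (Q H g <= (n - 2)%:R * \sum_i g i ^+ 2)%R.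
Proof.
move=> n4 sH miss g0; apply: (spec_bound (cL := 2) (cM := 2) (cT := 1) sH _ _ miss) => //; lia.
Qed.

Lemma caseC H (g : 'I_n -> algC) k d : n = (2 * k + 5 + d)%N -> simple_graph H ->
  missing H (k + 2) (n - (k + 2)) ->
  (forall i, 0 <= g i) -> (Q H g <= (n - 2)%:R * \sum_i g i ^+ 2)%R.
Proof.
move=> hn sH miss g0.
have e1 : (n - 2 = 2 * k + 3 + d)%N by lia.
have e2 : (n - (k + 2) - (k + 2) = d + 1)%N by lia.
have e3 : (n - (n - (k + 2)) = k + 2)%N by lia.
apply: (spec_bound (cL := (2 * k + 3) * (2 * k + 3 + d)) (cM := (k + 2) * (2 * k + 3 + d))
   (cT := (k + 2) * (2 * k + 3)) sH _ _ miss) => //; rewrite ?e1 ?e2 ?e3.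
- lia.
- lia.
- by rewrite muln_gt0; apply/andP; split; lia.
- by rewrite muln_gt0; apply/andP; split; lia.
- by rewrite muln_gt0; apply/andP; split; lia.
- apply: eq_leq; ring.
- apply: eq_leq; ring.
- move=> _.
  have -> : ((2 * k + 3 + d) * ((2 * k + 3) * (2 * k + 3 + d)) + (2 * k + 3) * (2 * k + 3 + d)
     = (k + 2) * ((2 * k + 3) * (2 * k + 3 + d)) + (d + 1) * ((k + 2) * (2 * k + 3 + d))
       + (k + 2) * ((k + 2) * (2 * k + 3))
       + (k * (k + 2) * (2 * k + 3) + (k + 1) * (4 * k + 7) * d + (k + 1) * d * d))%N by ring.
  exact: leq_addr.
Qed.

End Final.

Section Edges.
Variable n : nat.
Implicit Types (G H : graph n).

Definition T2 : {set {set 'I_n}} := [set e : {set 'I_n} | #|e| == 2].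

Lemma card_T2 : #|T2| = 'C(n, 2).
Proof. by rewrite /T2 card_draws card_ord. Qed.

Definition Miss a0 (w : 'I_n) : {set {set 'I_n}} :=
  [set [set w; u] | u in [set u : 'I_n | a0 <= u < w]].

Lemma card_Miss a0 (w : 'I_n) : a0 <= w -> #|Miss a0 w| = w - a0.
Proof.
move=> aw; rewrite card_imset; last exact: set2_inj.
rewrite -sum1_card.
rewrite (eq_bigl (fun u : 'I_n => a0 <= u < w)); last by move=> u; rewrite inE.
rewrite (@sum_range n a0 w (fun _ => 1)) //; last exact: ltnW.
by rewrite sum_nat_const_nat muln1.
Qed.

Lemma Miss_T2 a0 (w : 'I_n) : Miss a0 w \subset T2.
Proof.
apply/subsetP => e /imsetP [u]; rewrite inE => /andP [_ uw] ->.
have wu : w != u by apply/eqP => E; move: uw; rewrite E ltnn.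
by rewrite inE cards2 wu.
Qed.

Lemma Miss_dis H a0 b0 (w : 'I_n) : missing H a0 b0 -> b0 <= w -> [disjoint H & Miss a0 w].
Proof.
move=> miss bw; rewrite -setI_eq0; apply/eqP/setP => e; rewrite !inE.
apply/negbTE/negP => /andP [eH /imsetP [u]]; rewrite inE => /andP [au _] E.
by move: (miss u w); rewrite setUC -E eH au bw => /(_ isT).
Qed.

Lemma count_edges H (M : {set {set 'I_n}}) : simple_graph H -> M \subset T2 -> [disjoint H & M] ->
  #|H| + #|M| <= 'C(n, 2).
Proof.
move=> sH MT dis; rewrite -card_T2 -cardsUI.
move: dis; rewrite -setI_eq0 => /eqP ->; rewrite cards0 addn0.
apply: subset_leq_card; rewrite subUset MT andbT.
by apply/subsetP => e /sH ce; rewrite inE ce.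
Qed.

Lemma binn1 : 0 < n -> 'C(n, 2) = 'C(n.-1, 2) + n.-1.
Proof. by case: n => [//|m] _; rewrite binS bin1. Qed.

Lemma edgesA H : 4 <= n -> simple_graph H -> missing H 0 (n - 1) -> #|H| <= 'C(n.-1, 2).
Proof.
move=> n4 sH miss.
have wl : n - 1 < n by lia.
pose w := Ordinal wl.
have := count_edges sH (Miss_T2 0 w) (@Miss_dis _ _ _ w miss (leqnn _)).
rewrite card_Miss // binn1; last by lia.
rewrite /= subn0; lia.
Qed.

Lemma edgesBC H a0 b0 : 4 <= n -> simple_graph H -> missing H a0 b0 -> b0 <= n - 2 ->
  2 * a0 + 1 <= n -> #|H| <= ('C(n.-1, 2)).+1.
Proof.
move=> n4 sH miss bn an.
have wl1 : n - 1 < n by lia.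
have wl2 : n - 2 < n by lia.
pose w1 := Ordinal wl1. pose w2 := Ordinal wl2.
have dis12 : [disjoint Miss a0 w1 & Miss a0 w2].
  rewrite -setI_eq0; apply/eqP/setP => e; rewrite !inE.
  apply/negbTE/negP => /andP [/imsetP [u _ E1] /imsetP [v]]; rewrite inE => /andP [_ vw] E2.
  have : w1 \in e by rewrite E1 set21.
  rewrite E2 => /set2P [] E; move: (congr1 val E) vw => /=; lia.
have MT : Miss a0 w1 :|: Miss a0 w2 \subset T2 by rewrite subUset !Miss_T2.
have dis : [disjoint H & Miss a0 w1 :|: Miss a0 w2].
  have d1 : [disjoint H & Miss a0 w1] by apply: (Miss_dis miss) => /=; lia.
  have d2 : [disjoint H & Miss a0 w2] by apply: (Miss_dis miss) => /=.
  by rewrite -setI_eq0 setIUr (disjoint_setI0 d1) (disjoint_setI0 d2) setU0.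
have := count_edges sH MT dis.
rewrite cardsU disjoint_setI0 // cards0 subn0 !card_Miss /=; try lia.
rewrite binn1; last by lia.
lia.
Qed.

End Edges.

Lemma missing_mono n (H : graph n) a0 b0 b1 : missing H a0 b0 -> (b0 <= b1)%N -> missing H a0 b1.
Proof.
move=> miss b01 u v uv; apply/negP => /andP [au bv].
by move: (miss u v uv); rewrite au (leq_trans b01 bv).
Qed.

Lemma get_edge n (H : graph n) a b : fixedg H -> (1 <= a)%N -> (a < b)%N -> (b <= n)%N ->
  (missing H (a - 1) (b - 1) -> False) -> has_edge H a b.
Proof.
move=> fH a1 ab bn h.
have ha : (a - 1 < n)%N by lia.
have hb : (b - 1 < n)%N by lia.
pose u := Ordinal ha. pose v := Ordinal hb.
case E: ([set u; v] \in H).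
  by exists u, v; split => //=; lia.
exfalso; apply: h => u' v' uv'; apply/negP => /andP [au bv].
have uv : (u < v)%N by rewrite /=; lia.
by have := shift fH uv uv' au bv; rewrite E.
Qed.

Lemma no_miss n (G : graph n) :
  simple_graph G ->
  ((('C(n.-1, 2)).+1 < nedges G)%N \/ spec_radius_gt G ((n - 2)%:R)%R) ->
  (forall g : 'I_n -> algC, (forall i, 0 <= g i)%R ->
      (Q (kelmans_closure G) g <= (n - 2)%:R * \sum_i g i ^+ 2)%R) ->
  (#|kelmans_closure G| <= ('C(n.-1, 2)).+1)%N -> False.
Proof.
move=> sG [hE|[lam [ev hl]]] SB EB.
  by move: hE; rewrite /nedges -(closure_card G); lia.
have [f [f0 s0 hf]] := eig_Q ev.
have [g [g0 gs gW]] := closure_mono sG f0.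
have := SB g g0; rewrite gs (QW _ (closure_simple sG)) => hg.
rewrite (QW _ sG) in hf.
have : (`|lam| * \sum_i f i ^+ 2 <= (n - 2)%:R * \sum_i f i ^+ 2)%R.
  apply: (le_trans hf); apply: le_trans hg.
  by rewrite lerMn2r /=.
rewrite ler_pM2r // => hle.
by move: (lt_le_trans hl hle); rewrite ltxx.
Qed.

Theorem mainTheorem7 (n : nat) (G : graph n) :
  (4 <= n)%N -> simple_graph G ->
  ((('C(n.-1, 2)).+1 < nedges G)%N \/ spec_radius_gt G ((n - 2)%:R)%R) ->
  (forall j : nat, (3 <= j <= (n.+1)./2)%N ->
     has_edge (kelmans_closure G) j (n + 2 - j)) /\
  (forall k : nat, (1 <= k <= n./2)%N ->
     has_edge (kelmans_closure G) k (n + 1 - k)).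
Proof.
move=> n4 sG hyp.
have sH := closure_simple sG.
have fH := closure_fixed sG.
split.
  move=> j /andP [j3 jn].
  have jn' : (2 * j <= n + 1)%N by move: jn; rewrite -divn2 leq_divRL //; lia.
  apply: get_edge => //; try lia.
  move=> miss; apply: (no_miss sG hyp).
    move=> g g0; apply: (@caseC _ _ _ (j - 3) (n + 1 - 2 * j)) => //; first lia.
    have -> : (j - 3 + 2 = j - 1)%N by lia.
    by apply: (missing_mono miss); lia.
  by apply: (edgesBC n4 sH miss); lia.
move=> k /andP [k1 kn].
have kn' : (2 * k <= n)%N by move: kn; rewrite -divn2 leq_divRL //; lia.
apply: get_edge => //; try lia.
move=> miss; apply: (no_miss sG hyp).
- move=> g g0.
  case: (ltngtP k 2) => [k2|k2|k2].
  + have e : (k - 1 = 0)%N by lia.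
    rewrite e in miss; apply: caseA => //; apply: (missing_mono miss); lia.
  + apply: (@caseC _ _ _ (k - 3) (n + 1 - 2 * k)) => //; first lia.
    have -> : (k - 3 + 2 = k - 1)%N by lia.
    by apply: (missing_mono miss); lia.
  + have e : (k - 1 = 1)%N by lia.
    rewrite e in miss; apply: caseB => //; apply: (missing_mono miss); lia.
- case: (ltngtP k 2) => [k2|k2|k2].
  + have e : (k - 1 = 0)%N by lia.
    rewrite e in miss.
    have : (#|kelmans_closure G| <= 'C(n.-1, 2))%N.
      apply: (edgesA n4 sH); apply: (missing_mono miss); lia.
    lia.
  + by apply: (edgesBC n4 sH miss); lia.
  + by apply: (edgesBC n4 sH miss); lia.
Qed.
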